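(* Let $n,m\ge 1$. For each $i\in\{1,\dots,n\}$ let $\Gamma_i\in\mathbb{R}^{m\times m}$ be a diagonal matrix with diagonal entries in $\{0,1\}$, let $\mathcal{B}_i\in\mathbb{R}^{l_i\times m}$, $Z_i\in\mathbb{R}^{k_i\times l_i}$ and $\mu_i\ge 0$ be such that $M_i=\mathcal{B}_i\Gamma_i\Gamma_i\mathcal{B}_i^{\top}+\mu_iZ_i^{\top}Z_i$ is invertible, and set $P_i=\Gamma_i-\Gamma_i\mathcal{B}_i^{\top}M_i^{-1}\mathcal{B}_i\Gamma_i$ and $\mathcal{P}_{III}=\sum_{i=1}^nP_i$. Let $\mathbf{1}\in\mathbb{R}^m$ be the all-ones vector. Then the following statements are equivalent: (a) $\mathcal{P}_{III}\mathbf{1}=0$; (b) $P_i\mathbf{1}=0$ for every $i\in\{1,\dots,n\}$; (c) for every $i\in\{1,\dots,n\}$ there exists $x_i\in\mathbb{R}^{l_i}$ with $\Gamma_i\mathcal{B}_i^{\top}x_i=\Gamma_i\mathbf{1}$ and, if $\mu_i>0$, additionally $Z_ix_i=0$.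
   Context: In the paper, $\Gamma_i$ is the visibility matrix of the $i$-th (partial) datum shape $D_i\in\mathbb{R}^{d\times m}$ (its $j$-th diagonal entry is $1$ iff the $j$-th point is observed in $D_i$), $\mathcal{B}_i=\mathcal{B}_i(D_i)$ is the matrix of features of the points of $D_i$ under a linear basis warp, $Z_i$ its regularization matrix and $\mu_i$ its smoothing weight. *)

(* Defs.v *)
From mathcomp Require Import all_boot all_order all_algebra.
Set Implicit Arguments. Unset Strict Implicit. Unset Printing Implicit Defensive.
Import Order.TTheory GRing.Theory Num.Theory.
Local Open Scope ring_scope.

Definition is_visibility (R : realFieldType) (m : nat) (G : 'M[R]_m) : Prop :=
  is_diag_mx G /\ (forall j : 'I_m, G j j = 0 \/ G j j = 1).

Definition Mmat (R : realFieldType) (m l k : nat) (G : 'M[R]_m)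
  (B : 'M[R]_(l, m)) (Z : 'M[R]_(k, l)) (mu : R) : 'M[R]_l :=
  B *m G *m G *m B^T + mu *: (Z^T *m Z).

Definition Pmat (R : realFieldType) (m l k : nat) (G : 'M[R]_m)
  (B : 'M[R]_(l, m)) (Z : 'M[R]_(k, l)) (mu : R) : 'M[R]_m :=
  G - G *m B^T *m invmx (Mmat G B Z mu) *m B *m G.

Definition ones (R : realFieldType) (m : nat) : 'cV[R]_m := const_mx 1.

(* Main.v *)
Require Import Defs.
From mathcomp Require Import all_boot all_order all_algebra.
From mathcomp Require Import ring lra.
Import Order.TTheory GRing.Theory Num.Theory.
Local Open Scope ring_scope.

Lemma vis_props (R : realFieldType) m (G : 'M[R]_m) :
  is_visibility G -> G^T = G /\ G *m G = G.
Proof.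
case=> /diag_mxP [d ->] H; split; first exact: tr_diag_mx.
rewrite mul_diag_mx; apply/matrixP=> i j; rewrite !mxE.
have := H i; rewrite !mxE eqxx mulr1n.
by case=> ->; rewrite ?mul0r ?mul1r ?mul0rn.
Qed.


Lemma tr11 (R : realFieldType) (A : 'M[R]_1) : A^T = A.
Proof. by apply/matrixP=> i j; rewrite mxE !ord1. Qed.

Section S.
Variables (R : realFieldType) (m l k : nat) (G : 'M[R]_m) (B : 'M[R]_(l,m))
  (Z : 'M[R]_(k,l)) (mu : R).
Hypotheses (GT : G^T = G) (GG : G *m G = G) (hM : Mmat G B Z mu \in unitmx).

Let one := ones R m.
Let u := G *m one.
Let w := B *m u.
Let y := invmx (Mmat G B Z mu) *m w.
Let r := G *m B^T *m y - u.
Let z := Z *m y.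

Lemma GGl p (X : 'M[R]_(p, m)) : X *m G *m G = X *m G.
Proof. by rewrite -mulmxA GG. Qed.

Lemma key : (one^T *m Pmat G B Z mu *m one) 0 0 =
   (r^T *m r) 0 0 + mu * (z^T *m z) 0 0.
Proof.
have My : Mmat G B Z mu *m y = w by rewrite /y mulKVmx.
have e1 : one^T *m Pmat G B Z mu *m one = u^T *m u - w^T *m y.
  rewrite /Pmat mulmxBr mulmxBl; congr (_ - _).
    by rewrite /u !trmx_mul GT !mulmxA GGl.
  by rewrite /y /w /u !trmx_mul GT !mulmxA.
have e2 : r^T *m r = y^T *m (B *m G *m G *m B^T) *m y - y^T *m w - w^T *m y + u^T *m u.
  rewrite /r !raddfB /= !mulmxBl.
  have -> : (G *m B^T *m y)^T *m (G *m B^T *m y) = y^T *m (B *m G *m G *m B^T) *m y.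
    by rewrite !trmx_mul trmxK GT !mulmxA.
  have -> : (G *m B^T *m y)^T *m u = y^T *m w.
    by rewrite /w /u !trmx_mul trmxK GT !mulmxA GGl.
  have -> : u^T *m (G *m B^T *m y) = w^T *m y.
    by rewrite /w /u !trmx_mul GT !mulmxA GGl.
  by apply/matrixP=> i j; rewrite !mxE; lra.
have e3 : mu * (z^T *m z) 0 0 = (y^T *m (mu *: (Z^T *m Z)) *m y) 0 0.
  by rewrite /z trmx_mul -scalemxAr -scalemxAl !mulmxA [in RHS]mxE.
have e4 : y^T *m w = w^T *m y by rewrite -[LHS]tr11 trmx_mul trmxK.
have e5 : y^T *m (B *m G *m G *m B^T) *m y + y^T *m (mu *: (Z^T *m Z)) *m y = y^T *m w.
  by rewrite -mulmxDl -mulmxDr -mulmxA My.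
rewrite e3 e2 e1 -e4 -e5.
set a := u^T *m u; set b := w^T *m y; set c := y^T *m (B *m G *m G *m B^T) *m y.
set W := y^T *m (mu *: (Z^T *m Z)) *m y.
have aux : a - (c + W) = c - (c + W) - (c + W) + a + W.
  by apply/matrixP=> i j; rewrite !mxE; lra.
by rewrite aux [LHS]mxE.
Qed.

Lemma sq_ge0 p (v : 'cV[R]_p) : 0 <= (v^T *m v) 0 0.
Proof. rewrite mxE; apply: sumr_ge0 => j _; rewrite mxE -expr2; exact: sqr_ge0. Qed.

Lemma sq_eq0 p (v : 'cV[R]_p) : (v^T *m v) 0 0 = 0 -> v = 0.
Proof.
rewrite mxE => /eqP; rewrite psumr_eq0 => [/allP H|j _]; last first.
  by rewrite mxE -expr2; exact: sqr_ge0.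
apply/matrixP=> i j; rewrite ord1 mxE.
have := H i (mem_index_enum _); rewrite mxE -expr2 sqrf_eq0 => /eqP; done.
Qed.

Hypothesis hmu : 0 <= mu.

Lemma q_ge0 : 0 <= (one^T *m Pmat G B Z mu *m one) 0 0.
Proof. by rewrite key; apply: addr_ge0; [exact: sq_ge0 | apply: mulr_ge0 => //; exact: sq_ge0]. Qed.

Lemma q0_c : (one^T *m Pmat G B Z mu *m one) 0 0 = 0 ->
  exists x : 'cV[R]_l, G *m B^T *m x = G *m ones R m /\ (0 < mu -> Z *m x = 0).
Proof.
rewrite key => /eqP; rewrite paddr_eq0; last 2 first.
- exact: sq_ge0.
- by apply: mulr_ge0 => //; exact: sq_ge0.
case/andP=> /eqP /sq_eq0 r0 /eqP hz; exists y; split.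
  by apply/eqP; rewrite -subr_eq0; apply/eqP.
move=> mu0; apply: sq_eq0; move/eqP: hz; rewrite mulf_eq0 => /orP[/eqP mu00|/eqP //].
by move: mu0; rewrite mu00 ltxx.
Qed.

Lemma c_b : (exists x : 'cV[R]_l, G *m B^T *m x = G *m ones R m /\ (0 < mu -> Z *m x = 0)) ->
  Pmat G B Z mu *m ones R m = 0.
Proof.
case=> x [hx hz].
have Mx : Mmat G B Z mu *m x = B *m G *m ones R m.
  rewrite /Mmat mulmxDl -scalemxAl -!mulmxA [Z^T *m _]mulmxA.
  have -> : mu *: (Z^T *m Z *m x) = 0.
    case: (ltrgtP mu 0) => [mun|mup|->]; first by move: hmu; rewrite leNgt mun.
      by rewrite -mulmxA hz // mulmx0 scaler0.
    by rewrite scale0r.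
  by rewrite addr0 (mulmxA G B^T x) hx (mulmxA G G) GG.
rewrite /Pmat mulmxBl -!mulmxA (mulmxA B G) -Mx mulKmx // mulmxA hx.
by rewrite subrr.
Qed.
End S.
Theorem theorem3 (R : realFieldType) (n m : nat) (hn : (1 <= n)%N) (hm : (1 <= m)%N)
  (l k : 'I_n -> nat)
  (Gamma : forall i : 'I_n, 'M[R]_m)
  (B : forall i : 'I_n, 'M[R]_(l i, m))
  (Z : forall i : 'I_n, 'M[R]_(k i, l i))
  (mu : 'I_n -> R)
  (hG : forall i, is_visibility (Gamma i))
  (hmu : forall i, 0 <= mu i)
  (hM : forall i, Mmat (Gamma i) (B i) (Z i) (mu i) \in unitmx) :
  let P := fun i => Pmat (Gamma i) (B i) (Z i) (mu i) in
  let P3 := \sum_(i < n) P i in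
  [/\ (P3 *m ones R m = 0 <-> forall i, P i *m ones R m = 0),
      ((forall i, P i *m ones R m = 0) <->
         forall i, exists x : 'cV[R]_(l i),
           Gamma i *m (B i)^T *m x = Gamma i *m ones R m /\
           (0 < mu i -> Z i *m x = 0))
    & (P3 *m ones R m = 0 <->
         forall i, exists x : 'cV[R]_(l i),
           Gamma i *m (B i)^T *m x = Gamma i *m ones R m /\
           (0 < mu i -> Z i *m x = 0))].
Proof.
move=> P P3.
have hGi i := @vis_props R m (Gamma i) (hG i).
have cb : (forall i, exists x : 'cV[R]_(l i),
           Gamma i *m (B i)^T *m x = Gamma i *m ones R m /\
           (0 < mu i -> Z i *m x = 0)) -> forall i, P i *m ones R m = 0.
  by move=> H i; exact: (@c_b _ _ _ _ _ _ _ _ (hGi i).2 (hM i) (hmu i) (H i)).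
have bc : (forall i, P i *m ones R m = 0) -> forall i, exists x : 'cV[R]_(l i),
           Gamma i *m (B i)^T *m x = Gamma i *m ones R m /\
           (0 < mu i -> Z i *m x = 0).
  move=> H i; apply: (@q0_c _ _ _ _ _ _ _ _) (hGi i).1 (hGi i).2 (hM i) (hmu i) _.
  by rewrite -mulmxA H mulmx0 mxE.
have ba : (forall i, P i *m ones R m = 0) -> P3 *m ones R m = 0.
  by move=> H; rewrite /P3 mulmx_suml big1.
have ab : P3 *m ones R m = 0 -> forall i, P i *m ones R m = 0.
  move=> H; apply: cb => i; apply: (@q0_c _ _ _ _ _ _ _ _) (hGi i).1 (hGi i).2 (hM i) (hmu i) _.
  have S : \sum_(j < n) ((ones R m)^T *m P j *m ones R m) 0 0 = 0.
    rewrite -summxE -mulmx_suml -mulmx_sumr -/P3 -mulmxA H mulmx0 mxE //.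
  apply: (psumr_eq0P _ S) => // j _.
  exact: (@q_ge0 _ _ _ _ _ _ _ _ (hGi j).1 (hGi j).2 (hM j) (hmu j)).
split; split; auto.
Qed.
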